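(* (a) Suppose $\hat\rho_{\rm loc}$ is a density matrix on $\mathcal H_{\rm loc}$ all of whose eigenvalues are nonzero. Then $\mathcal L(\hat\rho_{\rm loc}^{\otimes n})=0$ if and only if both of the following hold: (iii$'$) $\mathcal L_i(\hat\rho_{\rm loc})=0$ for all $i\in\Lambda$; (iv$'$) $[\hat H_{ij},(\hat\rho_{\rm loc})_i\otimes(\hat\rho_{\rm loc})_j]=0$ for all $(i,j)\in\Lambda_2$. (b) For an arbitrary density matrix $\hat\rho_{\rm loc}$ on $\mathcal H_{\rm loc}$ (not necessarily of full rank), if (iii$'$) and (iv$'$) both hold, then $\mathcal L(\hat\rho_{\rm loc}^{\otimes n})=0$.
   Context: Setting: a lattice of $n$ sites $\Lambda=\{1,\dots,n\}$, $\Lambda_2=\{(i,j):1\le i<j\le n\}$; each site carries a copy of a finite-dimensional Hilbert space $\mathcal H_{\rm loc}$ of dimension $d$, total space $\mathcal H=\mathcal H_{\rm loc}^{\otimes n}$; $X_i$ denotes a single-site operator $X$ acting on site $i$. Dynamics: GKSL equation $\frac{d\hat\rho}{dt}=\mathcal L(\hat\rho)=-i[\hat H,\hat\rho]+\sum_k\mathcal D_{\hat L_k}(\hat\rho)$, $\mathcal D_{\hat L}(\rho)=\hat L\rho\hat L^\dagger-\frac12\{\hat L^\dagger\hat L,\rho\}$. Every Lindblad operator acts on a single site; those on site $i$ are $\hat L_i^{(\alpha)}$, $\alpha\in\Gamma_i$. $\hat H$ is Hermitian and a sum of at most 2-site terms. With ${\rm Tr}_{\overline{ij}}$, ${\rm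 Tr}_{\overline i}$ the partial traces over all sites other than $i,j$, resp. other than $i$, define $\hat H_{ij}=\frac{{\rm Tr}_{\overline{ij}}[\hat H]}{d^{n-2}}-\frac{{\rm Tr}_{\overline i}[\hat H]}{d^{n-1}}-\frac{{\rm Tr}_{\overline j}[\hat H]}{d^{n-1}}+\frac{{\rm Tr}[\hat H]}{d^n}$ and $\hat H_i=\frac{{\rm Tr}_{\overline i}[\hat H]}{d^{n-1}}-\frac{{\rm Tr}[\hat H]}{d^n}$, so that $\hat H=\sum_{(i,j)\in\Lambda_2}\hat H_{ij}+\sum_i\hat H_i+d^{-n}{\rm Tr}[\hat H]$. The single-site superoperator is $\mathcal L_i(\bullet)=-i[\hat H_i,\bullet]+\sum_{\alpha\in\Gamma_i}\mathcal D_{\hat L_i^{(\alpha)}}(\bullet)$, so $\mathcal L=-i\sum_{(i,j)\in\Lambda_2}[\hat H_{ij},\cdot]+\sum_i\mathcal L_i$. *)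

(* Defs.v *)
(* Scalars: an arbitrary numClosedFieldType C (e.g. the
   complex numbers), with conjugation ^* and imaginary unit 'i. *)
From HB Require Import structures.
From mathcomp Require Import all_boot all_order all_algebra.
Set Implicit Arguments. Unset Strict Implicit. Unset Printing Implicit Defensive.
Import Order.TTheory GRing.Theory Num.Theory.
Local Open Scope ring_scope.

Section Defs.
Variable C : numClosedFieldType.

Definition adj m p (A : 'M[C]_(m, p)) : 'M[C]_(p, m) := (map_mx Num.conj A)^T.

Definition density d (rho : 'M[C]_d) : Prop :=
  adj rho = rho /\ (forall v : 'rV[C]_d, 0 <= (v *m rho *m adj v) 0 0)
  /\ \tr rho = 1.

Variables n d : nat.

(* basis configurations of H = H_loc^{(x) n}: one local basis index per site *)
Definition cfg := {ffun 'I_n -> 'I_d}.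
(* operators on the total space, indexed via enum_rank of configurations *)
Definition op := 'M[C]_#|{: cfg}|.
Definition ent (A : op) (s t : cfg) : C := A (enum_rank s) (enum_rank t).
Definition mkop (f : cfg -> cfg -> C) : op :=
  \matrix_(p, q) f (enum_val p) (enum_val q).

Definition agree_off (S : {set 'I_n}) (s t : cfg) : bool :=
  [forall k, (k \notin S) ==> (s k == t k)].
Definition agree_on (S : {set 'I_n}) (s t : cfg) : bool :=
  [forall k, (k \in S) ==> (s k == t k)].
Definition glue (S : {set 'I_n}) (x z : cfg) : cfg :=
  [ffun k => if k \in S then x k else z k].

(* A acts only on the sites of S, i.e. A = B_S (x) 1_{complement of S} *)
Definition supported_on (S : {set 'I_n}) (A : op) : Prop :=
  (forall s t, ~~ agree_off S s t -> ent A s t = 0) /\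
  (forall s t s' t', agree_on S s s' -> agree_on S t t' ->
     agree_off S s t -> agree_off S s' t' -> ent A s t = ent A s' t').

Definition two_local (H : op) : Prop :=
  exists ts : seq op, H = \sum_(A <- ts) A /\
    (forall A, A \in ts -> exists S : {set 'I_n}, #|S| <= 2 /\ supported_on S A)%N.

(* (Tr_{sites not in S} A / d^{n-|S|}) (x) 1_{sites not in S}, as an
   operator on the total space *)
Definition avg (S : {set 'I_n}) (A : op) : op :=
  mkop (fun s t => if agree_off S s t then
          (d%:R ^- #|~: S|) * \sum_(z : cfg | agree_on S z s) ent A z (glue S t z)
        else 0).

Definition Hpair (H : op) (i j : 'I_n) : op :=
  avg [set i; j] H - avg [set i] H - avg [set j] H + avg set0 H.

Definition upd (s : cfg) (i : 'I_n) (b : 'I_d) : cfg :=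
  [ffun k => if k == i then b else s k].

(* Tr_{\bar i}[A] / d^{n-1} as a d x d matrix on site i *)
Definition ptr1 (i : 'I_n) (A : op) : 'M[C]_d :=
  \matrix_(a, b) ((d%:R ^- n.-1) * \sum_(s : cfg | s i == a) ent A s (upd s i b)).

Definition Hsite (H : op) (i : 'I_n) : 'M[C]_d :=
  ptr1 i H - ((d%:R ^- n) * \tr H)%:M.

Definition embed1 (i : 'I_n) (X : 'M[C]_d) : op :=
  mkop (fun s t => if agree_off [set i] s t then X (s i) (t i) else 0).

Definition tpow (rho : 'M[C]_d) : op := mkop (fun s t => \prod_k rho (s k) (t k)).

Definition comm m (A B : 'M[C]_m) : 'M[C]_m := A *m B - B *m A.

Definition dissip m (L rho : 'M[C]_m) : 'M[C]_m :=
  L *m rho *m adj L - 2%:R^-1 *: (adj L *m L *m rho + rho *m (adj L *m L)).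

(* GKSL generator; Lops i = the Lindblad operators L_i^(alpha), alpha in Gamma_i *)
Definition Lind (H : op) (Lops : 'I_n -> seq 'M[C]_d) (rho : op) : op :=
  - ('i *: comm H rho) +
  \sum_(i < n) \sum_(L <- Lops i) dissip (embed1 i L) rho.

Definition Lsite (H : op) (Lops : 'I_n -> seq 'M[C]_d) (i : 'I_n)
  (rho : 'M[C]_d) : 'M[C]_d :=
  - ('i *: comm (Hsite H i) rho) + \sum_(L <- Lops i) dissip L rho.

End Defs.

(* Main.v *)
Require Import Defs.
From HB Require Import structures.
From mathcomp Require Import all_boot all_order all_algebra.
From mathcomp Require Import ring zify.
Set Implicit Arguments. Unset Strict Implicit. Unset Printing Implicit Defensive.
Import Order.TTheory GRing.Theory Num.Theory.
Local Open Scope ring_scope.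

Section Aux.
Variable C : numClosedFieldType.
Variables n d : nat.
Local Notation op := (op C n d).
Local Notation cfg := (cfg n d).

Lemma entE (f : cfg -> cfg -> C) s t : ent (mkop f) s t = f s t.
Proof. by rewrite /ent /mkop mxE !enum_rankK. Qed.

Lemma op_ext (A B : op) : (forall s t, ent A s t = ent B s t) -> A = B.
Proof.
move=> h; apply/matrixP => p q; have := h (enum_val p) (enum_val q).
by rewrite /ent !enum_valK.
Qed.

Lemma ent_mul (A B : op) s t : ent (A *m B) s t = \sum_u ent A s u * ent B u t.
Proof.
rewrite /ent mxE (reindex (@enum_rank cfg)) //.
by exists enum_val => x _; [exact: enum_rankK | exact: enum_valK].
Qed.

Lemma ent_tr (A : op) : \tr A = \sum_u ent A u u.
Proof.
rewrite /mxtrace (reindex (@enum_rank cfg)) //.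
by exists enum_val => x _; [exact: enum_rankK | exact: enum_valK].
Qed.

Lemma ent1 s t : ent (1%:M : op) s t = (s == t)%:R.
Proof. by rewrite /ent mxE (inj_eq enum_rank_inj). Qed.

Lemma ent_scalar c s t : ent (c%:M : op) s t = c * (s == t)%:R.
Proof. by rewrite /ent mxE (inj_eq enum_rank_inj) mulr_natr. Qed.

Lemma entD (A B : op) s t : ent (A + B) s t = ent A s t + ent B s t.
Proof. by rewrite /ent mxE. Qed.
Lemma entZ c (A : op) s t : ent (c *: A) s t = c * ent A s t.
Proof. by rewrite /ent mxE. Qed.
Lemma entN (A : op) s t : ent (- A) s t = - ent A s t.
Proof. by rewrite /ent mxE. Qed.
Lemma entB (A B : op) s t : ent (A - B) s t = ent A s t - ent B s t.
Proof. by rewrite /ent !mxE. Qed.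
Lemma ent0 s t : ent (0 : op) s t = 0.
Proof. by rewrite /ent mxE. Qed.
Lemma ent_sum I (r : seq I) (P : pred I) (F : I -> op) s t :
  ent (\sum_(i <- r | P i) F i) s t = \sum_(i <- r | P i) ent (F i) s t.
Proof. by rewrite /ent summxE. Qed.
Lemma ent_adj (A : op) s t : ent (adj A) s t = (ent A t s)^*.
Proof. by rewrite /ent /adj !mxE. Qed.

Lemma prodb (P : pred 'I_n) (b : 'I_n -> bool) :
  \prod_(k | P k) ((b k)%:R : C) = ([forall k, P k ==> b k])%:R.
Proof.
case: (boolP [forall k, P k ==> b k]) => [/forallP h|/forallPn [k]].
  by rewrite big1 // => k Pk; have := h k; rewrite Pk => /= ->.
by rewrite negb_imply => /andP [Pk hk]; rewrite (bigD1 k) //= (negbTE hk) mul0r.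
Qed.

Definition prodop (X : 'I_n -> 'M[C]_d) : op :=
  mkop (fun s t => \prod_k X k (s k) (t k)).

Lemma ent_prodop X s t : ent (prodop X) s t = \prod_k X k (s k) (t k).
Proof. exact: entE. Qed.

Lemma eq_prodop X Y : (forall k, X k = Y k) -> prodop X = prodop Y.
Proof. by move=> h; apply: op_ext => s t; rewrite !ent_prodop; apply: eq_bigr => k _; rewrite h. Qed.

Lemma prodop_mul X Y : prodop X *m prodop Y = prodop (fun k => X k *m Y k).
Proof.
apply: op_ext => s t; rewrite ent_mul. rewrite ent_prodop.
rewrite (eq_bigr (fun u : cfg => \prod_k (X k (s k) (u k) * Y k (u k) (t k)))); last first.
  by move=> u _; rewrite !ent_prodop -big_split.
transitivity (\prod_k \sum_b X k (s k) b * Y k b (t k)); last first.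
  by apply: eq_bigr => k _; rewrite mxE.
by rewrite bigA_distr_bigA.
Qed.

Lemma prodop1 : prodop (fun _ => 1%:M) = 1%:M.
Proof.
apply: op_ext => s t; rewrite ent_prodop ent1.
under eq_bigr do rewrite mxE.
rewrite prodb; congr (_%:R); congr (nat_of_bool _); apply/forallP/eqP => [h|-> k]; last by rewrite /= eqxx.
apply/ffunP => k; apply/eqP; by move: (h k).
Qed.

Lemma adj_prodop X : adj (prodop X) = prodop (fun k => adj (X k)).
Proof.
apply: op_ext => s t; rewrite ent_adj !ent_prodop rmorph_prod.
by apply: eq_bigr => k _; rewrite /adj !mxE.
Qed.


Definition islin (U V : lmodType C) (f : U -> V) :=
  forall c x y, f (c *: x + y) = c *: f x + f y.

Section Lin.
Variables (U V : lmodType C) (f : U -> V) (hf : islin f).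
Lemma lin0 : f 0 = 0.
Proof.
have h := hf 1 0 0; rewrite !scale1r addr0 in h.
by apply: (addrI (f 0)); rewrite addr0 -h.
Qed.
Lemma linD x y : f (x + y) = f x + f y.
Proof. by have := hf 1 x y; rewrite !scale1r. Qed.
Lemma linZ c x : f (c *: x) = c *: f x.
Proof. by have := hf c x 0; rewrite !addr0 lin0 addr0. Qed.
Lemma linN x : f (- x) = - f x.
Proof. by rewrite -scaleN1r linZ scaleN1r. Qed.
Lemma linB x y : f (x - y) = f x - f y.
Proof. by rewrite linD linN. Qed.
Lemma lin_sum I (r : seq I) (P : pred I) (F : I -> U) :
  f (\sum_(i <- r | P i) F i) = \sum_(i <- r | P i) f (F i).
Proof. exact: (big_morph f linD lin0). Qed.
End Lin.

Lemma islin_comp (U V W : lmodType C) (f : V -> W) (g : U -> V) :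
  islin f -> islin g -> islin (fun x => f (g x)).
Proof. by move=> hf hg c x y; rewrite hg hf. Qed.

Lemma islin_mull m p q (M : 'M[C]_(m, p)) : islin (fun A : 'M[C]_(p, q) => M *m A).
Proof. by move=> c x y; rewrite mulmxDr scalemxAr. Qed.
Lemma islin_mulr m p q (M : 'M[C]_(p, q)) : islin (fun A : 'M[C]_(m, p) => A *m M).
Proof. by move=> c x y; rewrite mulmxDl scalemxAl. Qed.

Lemma ent_prodop_delta (s t s0 t0 : cfg) :
  ent (prodop (fun k => delta_mx (s k) (t k))) s0 t0 = ((s0 == s) && (t0 == t))%:R.
Proof.
rewrite ent_prodop; under eq_bigr do rewrite mxE.
rewrite prodb; congr (_%:R); congr (nat_of_bool _).
apply/forallP/andP => [h|[/eqP-> /eqP->] k]; last by rewrite /= !eqxx.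
split; apply/eqP/ffunP => k; by have /andP[/eqP ? /eqP ?] := h k.
Qed.

Lemma expand (A : op) :
  A = \sum_s \sum_t ent A s t *: prodop (fun k => delta_mx (s k) (t k)).
Proof.
apply: op_ext => s0 t0; rewrite ent_sum.
under eq_bigr do rewrite ent_sum.
under eq_bigr do under eq_bigr do rewrite entZ ent_prodop_delta.
rewrite (bigD1 s0) //= [X in _ + X]big1 ?addr0.
  rewrite (bigD1 t0) //= [X in _ + X]big1 ?addr0; first by rewrite !eqxx mulr1.
  by move=> t ht; rewrite eqxx eq_sym (negbTE ht) mulr0.
move=> s hs; rewrite big1 // => t _.
by rewrite eq_sym (negbTE hs) mulr0.
Qed.

Lemma lin_ext (V : lmodType C) (f g : op -> V) : islin f -> islin g ->
  (forall X, f (prodop X) = g (prodop X)) -> forall A, f A = g A.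
Proof.
move=> hf hg h A; rewrite (expand A) !(lin_sum hf) !(lin_sum hg).
apply: eq_bigr => s _; rewrite !(lin_sum hf) !(lin_sum hg).
by apply: eq_bigr => t _; rewrite (linZ hf) (linZ hg) h.
Qed.


Lemma prodbT (b : 'I_n -> bool) :
  \prod_k ((b k)%:R : C) = ([forall k, b k])%:R.
Proof. by rewrite prodb; congr (_%:R); congr (nat_of_bool _); apply: eq_forallb. Qed.

Lemma prod_ifT (T : {set 'I_n}) (x : C) :
  \prod_k (if k \in T then 1 else x) = x ^+ #|~: T|.
Proof.
rewrite (eq_bigr (fun k => if k \in ~: T then x else 1)) => [|k _]; last first.
  by rewrite inE; case: (k \in T).
by rewrite -big_mkcond prodr_const.
Qed.

Lemma islin_avg T : islin (@avg C n d T).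
Proof.
move=> c A B; apply: op_ext => s t; rewrite entD entZ !entE; case: ifP => _; last first.
  by rewrite mulr0 addr0.
under eq_bigr do rewrite entD entZ.
rewrite big_split /= -mulr_sumr; ring.
Qed.

Lemma avg_prodop T X : avg T (prodop X) =
  prodop (fun k => if k \in T then X k else (d%:R^-1 * \tr (X k))%:M).
Proof.
apply: op_ext => s t; rewrite entE ent_prodop.
pose G := fun k (b : 'I_d) => if k \in T then (b == s k)%:R * X k (s k) (t k) else X k b b.
pose W := fun k => if k \in T then X k (s k) (t k) else \tr (X k).
have e1 : \sum_(z | agree_on T z s) ent (prodop X) z (glue T t z) = \prod_k W k.
  transitivity (\sum_(z : cfg) \prod_k G k (z k)).
    rewrite big_mkcond; apply: eq_bigr => z _; case: ifP => hz.
      rewrite ent_prodop; apply: eq_bigr => k _; rewrite /G /glue ffunE.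
      case: ifP => kT //.
      by have := forallP hz k; rewrite kT /= => /eqP ->; rewrite eqxx mul1r.
    move/negbT: hz => /forallPn [k]; rewrite negb_imply => /andP [kT hk].
    by rewrite (bigD1 k) //= /G kT (negbTE hk) !mul0r.
  transitivity (\prod_k \sum_b G k b); first by rewrite bigA_distr_bigA.
  apply: eq_bigr => k _; rewrite /G /W; case: ifP => kT //.
  rewrite (bigD1 (s k)) //= eqxx mul1r big1 ?addr0 // => b hb.
  by rewrite (negbTE hb) mul0r.
rewrite e1.
rewrite [RHS](eq_bigr (fun k => ((k \notin T) ==> (s k == t k))%:R *
   ((if k \in T then 1 else d%:R^-1) * W k))); last first.
  move=> k _; rewrite /W; case: ifP => kT /=; first by rewrite !mul1r.
  by rewrite mxE mulr_natl.
rewrite big_split big_split /= prodbT prod_ifT exprVn.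
by rewrite /agree_off; case: ifP => _; rewrite ?mul1r ?mul0r.
Qed.


Lemma islin_sumf (U V : lmodType C) I (r : seq I) (P : pred I) (F : I -> U -> V) :
  (forall i, islin (F i)) -> islin (fun x => \sum_(i <- r | P i) F i x).
Proof.
move=> hF c x y; rewrite (eq_bigr _ (fun i _ => hF i c x y)) big_split /=.
by rewrite scaler_sumr.
Qed.
Lemma islin_addf (U V : lmodType C) (f g : U -> V) :
  islin f -> islin g -> islin (fun x => f x + g x).
Proof. by move=> hf hg c x y; rewrite hf hg scalerDr; rewrite addrACA. Qed.
Lemma islin_subf (U V : lmodType C) (f g : U -> V) :
  islin f -> islin g -> islin (fun x => f x - g x).
Proof. by move=> hf hg c x y; rewrite hf hg scalerBr opprD addrACA. Qed.

Lemma islin_embed1 (i : 'I_n) : islin (@embed1 C n d i).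
Proof.
move=> c A B; apply: op_ext => s t; rewrite entD entZ !entE.
by case: ifP => _; rewrite ?mxE // mulr0 addr0.
Qed.

Lemma embed1_prodop (i : 'I_n) (X : 'M[C]_d) : embed1 i X = prodop (fun k => if k == i then X else 1%:M).
Proof.
apply: op_ext => s t; rewrite entE ent_prodop (bigD1 i) //= eqxx.
rewrite (eq_bigr (fun k => (s k == t k)%:R)) => [|k /negbTE ->]; last by rewrite mxE.
rewrite prodb.
have -> : agree_off [set i] s t = [forall k, (k != i) ==> (s k == t k)].
  by apply: eq_forallb => k; rewrite in_set1.
by case: ifP => _; rewrite ?mulr1 ?mulr0.
Qed.

Lemma prodop_scal (i : 'I_n) (c : C) : prodop (fun k => if k == i then c%:M else 1%:M) = c *: 1%:M.
Proof.
rewrite -prodop1; apply: op_ext => s t; rewrite entZ !ent_prodop (bigD1 i) //= eqxx.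
rewrite [in RHS](bigD1 i) //= mulrA; congr (_ * _); first by rewrite !mxE mulr_natr.
by apply: eq_bigr => k /negbTE ->.
Qed.

Lemma embed1_scal (i : 'I_n) (c : C) : embed1 i (c%:M : 'M_d) = c *: 1%:M.
Proof.
rewrite embed1_prodop -(prodop_scal i); apply: eq_prodop => k.
by case: (k == i).
Qed.

Lemma adj1 m : adj (1%:M : 'M[C]_m) = 1%:M.
Proof. by apply/matrixP => a b; rewrite !mxE rmorph_nat eq_sym. Qed.

Lemma agree_on1 i (z s : cfg) : agree_on [set i] z s = (z i == s i).
Proof.
apply/forallP/eqP => [h|h k]; first by have := h i; rewrite in_set1 eqxx => /eqP.
by apply/implyP; rewrite in_set1 => /eqP ->; apply/eqP.
Qed.

Lemma embed1_ptr1 (i : 'I_n) (A : op) : embed1 i (ptr1 i A) = avg [set i] A.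
Proof.
apply: op_ext => s t; rewrite !entE; case: ifP => // _.
rewrite mxE cardsC1 card_ord; congr (_ * _).
apply: eq_big => z; first by rewrite agree_on1.
move=> _; suff -> : upd z i (t i) = glue [set i] t z by [].
by apply/ffunP => k; rewrite !ffunE in_set1; case: eqP => [->|].
Qed.

Lemma avg_set0 (A : op) : avg set0 A = (d%:R ^- n * \tr A) *: 1%:M.
Proof.
apply: op_ext => s t; rewrite entE entZ ent1.
have -> : agree_off set0 s t = (s == t).
  apply/forallP/eqP => [h|-> k]; last by rewrite eqxx implybT.
  by apply/ffunP => k; have := h k; rewrite inE /= => /eqP.
case: (s =P t) => [<-|_]; last by rewrite mulr0.
rewrite setC0 cardsT card_ord mulr1 ent_tr; congr (_ * _).
apply: eq_big => z; first by apply/forallP => k; rewrite inE.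
move=> _; suff -> : glue set0 s z = z by [].
by apply/ffunP => k; rewrite !ffunE inE.
Qed.

Lemma avg_commute (U : {set 'I_n}) (A : op) (Z : 'I_n -> 'M[C]_d) : (forall k, k \in U -> Z k = 1%:M) ->
  avg U A *m prodop Z = prodop Z *m avg U A.
Proof.
move=> hZ; move: A; apply: (lin_ext (f := fun A => avg U A *m prodop Z)
   (g := fun A => prodop Z *m avg U A)).
- by move=> c x y; rewrite islin_avg mulmxDl scalemxAl.
- by move=> c x y; rewrite islin_avg mulmxDr scalemxAr.
move=> X; rewrite avg_prodop !prodop_mul; apply: eq_prodop => k.
by case: ifP => kU; [rewrite hZ // mulmx1 mul1mx | rewrite scalar_mxC].
Qed.

Section Dpos.
Hypothesis d_gt0 : (0 < d)%N.

Lemma dn0 : (d%:R : C) != 0.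
Proof. by rewrite pnatr_eq0 -lt0n. Qed.

Lemma tr_scalar c : d%:R^-1 * \tr (c%:M : 'M[C]_d) = c.
Proof. by rewrite mxtrace_scalar -[c *+ d]mulr_natl mulrA mulVf ?mul1r ?dn0. Qed.

Lemma avg_avg (T U : {set 'I_n}) (A : op) : avg T (avg U A) = avg (T :&: U) A.
Proof.
move: A; apply: (lin_ext (f := fun A => avg T (avg U A)) (g := avg (T :&: U))).
- by move=> c x y; rewrite !islin_avg.
- exact: islin_avg.
move=> X; rewrite !avg_prodop; apply: eq_prodop => k; rewrite inE.
by case: (k \in T); case: (k \in U) => //=; rewrite tr_scalar.
Qed.

Lemma avg_embed1 (T : {set 'I_n}) (i : 'I_n) (X : 'M[C]_d) : avg T (embed1 i X) =
  if i \in T then embed1 i X else (d%:R^-1 * \tr X) *: 1%:M.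
Proof.
rewrite embed1_prodop avg_prodop; case: ifP => iT.
  apply: eq_prodop => k; case: (k =P i) => [->|_]; first by rewrite iT.
  by case: (k \in T) => //; rewrite tr_scalar.
rewrite -(prodop_scal i); apply: eq_prodop => k; case: (k =P i) => [->|_].
  by rewrite iT.
by case: (k \in T) => //; rewrite tr_scalar.
Qed.

Lemma count_agree (S : {set 'I_n}) (s : cfg) :
  \sum_(z | agree_on S z s) (1 : C) = d%:R ^+ #|~: S|.
Proof.
transitivity (\sum_(z : cfg) \prod_k (if k \in S then ((z k == s k)%:R : C) else 1)).
  rewrite big_mkcond; apply: eq_bigr => z _.
  rewrite (eq_bigr (fun k => ((k \in S) ==> (z k == s k))%:R)) => [|k _]; last first.
    by case: (k \in S).
  by rewrite prodbT /agree_on; case: [forall k, _].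
transitivity (\prod_k \sum_(b : 'I_d) (if k \in S then ((b == s k)%:R : C) else 1)).
  by rewrite bigA_distr_bigA.
rewrite -prod_ifT; apply: eq_bigr => k _; case: (k \in S).
  rewrite (bigD1 (s k)) //= eqxx big1 ?addr0 // => b hb.
  by rewrite (negbTE hb).
by rewrite sumr_const card_ord.
Qed.

Lemma avg_supported (S : {set 'I_n}) (A : op) : supported_on S A -> avg S A = A.
Proof.
case=> h1 h2; apply: op_ext => s t; rewrite entE; case: ifP => h; last first.
  by rewrite h1 // h.
rewrite (eq_bigr (fun _ => 1 * ent A s t)) => [|z hz]; last first.
  rewrite mul1r; apply: h2 => //.
  - by apply/forallP => k; apply/implyP => kS; rewrite /glue ffunE kS.
  - by apply/forallP => k; apply/implyP => kS; rewrite /glue ffunE (negbTE kS).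
rewrite -mulr_suml count_agree mulrA mulVf ?mul1r //.
by rewrite expf_neq0 // dn0.
Qed.

Lemma avg_conj (T : {set 'I_n}) (rho sig : 'M[C]_d) (B : op) : sig *m rho = 1%:M ->
  avg T (prodop (fun _ => rho) *m B *m prodop (fun _ => sig)) =
  prodop (fun k => if k \in T then rho else 1%:M) *m avg T B *m
  prodop (fun k => if k \in T then sig else 1%:M).
Proof.
move=> hsr; move: B.
apply: (lin_ext (f := fun B => avg T (prodop (fun _ => rho) *m B *m prodop (fun _ => sig)))
  (g := fun B => prodop (fun k => if k \in T then rho else 1%:M) *m avg T B *m
  prodop (fun k => if k \in T then sig else 1%:M))).
- by move=> c x y; rewrite mulmxDr mulmxDl -scalemxAr -scalemxAl islin_avg.
- by move=> c x y; rewrite islin_avg mulmxDr mulmxDl -scalemxAr -scalemxAl.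
move=> X; rewrite !prodop_mul !avg_prodop !prodop_mul; apply: eq_prodop => k.
case: ifP => kT //.
by rewrite mul1mx mulmx1 mxtrace_mulC mulmxA hsr mul1mx.
Qed.



Lemma pair_in (a b i j : 'I_n) : (a < b)%N -> (i < j)%N ->
  i \in [set a; b] -> j \in [set a; b] -> (i == a) && (j == b).
Proof.
rewrite !inE => ab ij /orP [] /eqP ei /orP [] /eqP ej; subst => //=.
- by rewrite ltnn in ij.
- by rewrite !eqxx.
- by move: ij ab; lia.
- by rewrite ltnn in ij.
Qed.

Lemma pair_sum_single (V : zmodType) (F : 'I_n -> 'I_n -> V) (a b : 'I_n) :
  (a < b)%N -> (forall i j : 'I_n, (i < j)%N -> (i != a) || (j != b) -> F i j = 0) ->
  \sum_(i : 'I_n) \sum_(j : 'I_n | (i < j)%N) F i j = F a b.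
Proof.
move=> ab h; rewrite (bigD1 a) //= (bigD1 b) //= big1 ?addr0; last first.
  by move=> j /andP [aj jb]; apply: h => //; rewrite jb orbT.
rewrite big1 ?addr0 // => i ia; apply: big1 => j ij; apply: h => //; by rewrite ia.
Qed.

Lemma pair_sum0 (V : zmodType) (F : 'I_n -> 'I_n -> V) :
  (forall i j : 'I_n, (i < j)%N -> F i j = 0) -> \sum_(i : 'I_n) \sum_(j : 'I_n | (i < j)%N) F i j = 0.
Proof. by move=> h; apply: big1 => i _; apply: big1 => j; apply: h. Qed.

Lemma setI2_out (i j : 'I_n) (S : {set 'I_n}) : i \notin S ->
  [set i; j] :&: S = [set j] :&: S.
Proof.
move=> h; apply/setP => k; rewrite !inE; case: eqP => [->|_] //=.
by rewrite (negbTE h) !andbF.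
Qed.
Lemma setI2_out' (i j : 'I_n) (S : {set 'I_n}) : j \notin S ->
  [set i; j] :&: S = [set i] :&: S.
Proof. by move=> h; rewrite setUC; apply: setI2_out. Qed.
Lemma setI1_out (i : 'I_n) (S : {set 'I_n}) : i \notin S ->
  [set i] :&: S = set0 :&: S.
Proof.
move=> h; apply/setP => k; rewrite !inE; case: eqP => [->|_] //=.
by rewrite (negbTE h).
Qed.

Definition rhsD (A : op) : op :=
  \sum_(i : 'I_n) \sum_(j : 'I_n | (i < j)%N) Hpair A i j +
  \sum_i (avg [set i] A - avg set0 A) + avg set0 A.

Lemma islin_Hpair i j : islin (fun A : op => Hpair A i j).
Proof.
rewrite /Hpair; apply: islin_addf; last exact: islin_avg.
apply: islin_subf; last exact: islin_avg.
by apply: islin_subf; exact: islin_avg.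
Qed.

Lemma islin_rhsD : islin rhsD.
Proof.
rewrite /rhsD; apply: islin_addf; last exact: islin_avg.
apply: islin_addf.
  apply: islin_sumf => i; apply: islin_sumf => j; exact: islin_Hpair.
by apply: islin_sumf => i; apply: islin_subf; exact: islin_avg.
Qed.

Ltac entring := apply: op_ext => ? ?; rewrite ?(entD, entB, entN, ent0); ring.

Lemma avgHp0 (H : op) (T : {set 'I_n}) (i j : 'I_n) :
  (i \notin T) || (j \notin T) -> avg T (Hpair H i j) = 0.
Proof.
move=> h; rewrite /Hpair !(linD (islin_avg T)) !(linN (islin_avg T)) !avg_avg.
case/orP: h => h.
  rewrite (setIC T [set i; j]) (setIC T [set i]) (setIC T [set j]).
  rewrite (setI2_out j h) (setI1_out h) set0I setI0; entring.
rewrite (setIC T [set i; j]) (setIC T [set i]) (setIC T [set j]).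
rewrite (setI2_out' i h) (setI1_out h) set0I setI0; entring.
Qed.

Lemma avgHp_self (H : op) (T : {set 'I_n}) (i j : 'I_n) :
  [set i; j] \subset T -> avg T (Hpair H i j) = Hpair H i j.
Proof.
move=> h; rewrite /Hpair !(linD (islin_avg T)) !(linN (islin_avg T)) !avg_avg.
have sub (U : {set 'I_n}) : U \subset T -> T :&: U = U by move=> hU; apply/setIidPr.
rewrite !sub //; first exact: sub0set.
- by apply: subset_trans h; rewrite sub1set !inE eqxx orbT.
- by apply: subset_trans h; rewrite sub1set !inE eqxx.
Qed.

Lemma rhsD_supp (S : {set 'I_n}) (A : op) :
  supported_on S A -> (#|S| <= 2)%N -> rhsD A = A.
Proof.
move=> hA hS.
have fE T : avg T A = avg (T :&: S) A by rewrite -{1}(avg_supported hA) avg_avg.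
have fS : avg S A = A by exact: avg_supported.
have hP i j : (i \notin S) || (j \notin S) -> Hpair A i j = 0.
  move=> h; rewrite /Hpair (fE [set i; j]) (fE [set i]) (fE [set j]) (fE set0).
  case/orP: h => h.
    rewrite (setI2_out j h) (setI1_out h); entring.
  rewrite (setI2_out' i h) (setI1_out h); entring.
have hS1 i : i \notin S -> avg [set i] A - avg set0 A = 0.
  by move=> h; rewrite (fE [set i]) (fE set0) setI1_out // subrr.
rewrite /rhsD.
have : [|| #|S| == 0%N, #|S| == 1%N | #|S| == 2%N].
  by move: hS; case: #|S| => [|[|[|]]].
case/or3P.
- move/eqP/cards0_eq => S0; rewrite pair_sum0 ?big1 ?add0r.
  + by rewrite -S0.
  + by move=> i _; apply: hS1; rewrite S0 inE.
  + by move=> i j _; apply: hP; rewrite S0 inE.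
- case/cards1P => a Sa; rewrite pair_sum0 ?add0r; last first.
    move=> i j ij; apply: hP; rewrite Sa !in_set1 -negb_and.
    apply/negP => /andP [/eqP ia /eqP ja]; by move: ij; rewrite ia ja ltnn.
  rewrite (bigD1 a) //= big1 ?addr0; last first.
    by move=> i ia; apply: hS1; rewrite Sa in_set1.
  rewrite -Sa fS; entring.
- case/cards2P => a [b [ab Sab]].
  have [a' [b' [lt' S']]] : exists a' b' : 'I_n, (a' < b')%N /\ S = [set a'; b'].
    case: (ltngtP a b) => h; first by exists a, b.
      by exists b, a; rewrite setUC.
    by move/val_inj: h => h; rewrite h eqxx in ab.
  rewrite (pair_sum_single (a := a') (b := b')) //; last first.
    move=> i j ij hne; apply: hP; rewrite -negb_and; apply/negP => /andP [iS jS].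
    have := pair_in lt' ij; rewrite -S' => /(_ iS jS).
    by move: hne; rewrite -negb_and => /negP.
  have ba : b' != a' by rewrite neq_ltn lt' orbT.
  rewrite (bigD1 a') //= (bigD1 b') //= big1 ?addr0; last first.
    move=> i /andP [ia ib]; apply: hS1; rewrite S' !inE negb_or ia ib //.
  rewrite /Hpair -S' fS; entring.
Qed.

Lemma Dec (H : op) : two_local H -> H = rhsD H.
Proof.
case=> ts [-> hts]; rewrite (lin_sum islin_rhsD); apply: eq_big_seq => A hA.
by have [S [hS hsup]] := hts A hA; rewrite (rhsD_supp hsup).
Qed.


Definition pat (rho : 'M[C]_d) (i : 'I_n) (Y : 'M[C]_d) : op :=
  prodop (fun k => if k == i then Y else rho).

Lemma prod_ifne (i : 'I_n) (M : 'I_n -> 'M[C]_d) (Y : 'M[C]_d) (s t : cfg) :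
  \prod_(k | k != i) (if k == i then Y else M k) (s k) (t k) =
  \prod_(k | k != i) M k (s k) (t k).
Proof. by apply: eq_bigr => k /negbTE ->. Qed.

Lemma islin_pat rho i : islin (pat rho i).
Proof.
move=> c X Y; apply: op_ext => s t; rewrite entD entZ !ent_prodop.
rewrite (bigD1 i) //= [X in _ = _ * X + _](bigD1 i) //= [X in _ = _ + X](bigD1 i) //=.
rewrite !eqxx !(prod_ifne i (fun _ => rho)) !mxE; ring.
Qed.

Lemma embed1_R rho i X : embed1 i X *m prodop (fun _ => rho) = pat rho i (X *m rho).
Proof.
rewrite embed1_prodop prodop_mul; apply: eq_prodop => k.
by case: (k == i); rewrite ?mul1mx.
Qed.
Lemma R_embed1 rho i X : prodop (fun _ => rho) *m embed1 i X = pat rho i (rho *m X).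
Proof.
rewrite embed1_prodop prodop_mul; apply: eq_prodop => k.
by case: (k == i); rewrite ?mulmx1.
Qed.
Lemma pat_embed1 rho i Y X : pat rho i Y *m embed1 i X = pat rho i (Y *m X).
Proof.
rewrite embed1_prodop prodop_mul; apply: eq_prodop => k.
by case: (k == i); rewrite ?mulmx1.
Qed.
Lemma embed1_mul (i : 'I_n) (X Y : 'M[C]_d) : embed1 i X *m embed1 i Y = embed1 i (X *m Y).
Proof.
rewrite !embed1_prodop prodop_mul; apply: eq_prodop => k.
by case: (k == i); rewrite ?mulmx1.
Qed.
Lemma adj_embed1 (i : 'I_n) (X : 'M[C]_d) : adj (embed1 i X) = embed1 i (adj X).
Proof.
rewrite !embed1_prodop adj_prodop; apply: eq_prodop => k.
by case: (k == i); rewrite ?adj1.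
Qed.

Lemma comm_embed1 rho i X :
  comm (embed1 i X) (prodop (fun _ => rho)) = pat rho i (comm X rho).
Proof. by rewrite /comm embed1_R R_embed1 -(linB (islin_pat rho i)). Qed.

Lemma dissip_embed1 rho i L :
  dissip (embed1 i L) (prodop (fun _ => rho)) = pat rho i (dissip L rho).
Proof.
rewrite /dissip adj_embed1 embed1_R pat_embed1 embed1_mul embed1_R R_embed1.
by rewrite -(linD (islin_pat rho i)) -(linZ (islin_pat rho i)) -(linB (islin_pat rho i)).
Qed.

Lemma comm_scal1 (c : C) (R : op) : comm (c *: 1%:M) R = 0.
Proof. by rewrite /comm -scalemxAl -scalemxAr mul1mx mulmx1 subrr. Qed.

Lemma islin_commL (R : op) : islin (fun X => comm X R).
Proof.
move=> c x y; rewrite /comm mulmxDl mulmxDr -scalemxAl -scalemxAr.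
by rewrite scalerBr opprD addrACA.
Qed.

Lemma embed1_Hsite (H : op) (i : 'I_n) :
  embed1 i (Hsite H i) = avg [set i] H - avg set0 H.
Proof. by rewrite /Hsite (linB (islin_embed1 i)) embed1_ptr1 embed1_scal avg_set0. Qed.

Lemma LindE (H : op) Lops rho : two_local H ->
  Lind H Lops (prodop (fun _ => rho)) =
  \sum_(i : 'I_n) \sum_(j : 'I_n | (i < j)%N)
      (- 'i) *: comm (Hpair H i j) (prodop (fun _ => rho)) +
  \sum_i pat rho i (Lsite H Lops i rho).
Proof.
move=> H2; set R := prodop (fun _ => rho).
have eR : rhsD H = \sum_(i : 'I_n) \sum_(j : 'I_n | (i < j)%N) Hpair H i j +
   \sum_i embed1 i (Hsite H i) + avg set0 H.
  by rewrite /rhsD; congr (_ + _ + _); apply: eq_bigr => i _; rewrite embed1_Hsite.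
rewrite /Lind; have -> : comm H R = comm (rhsD H) R by rewrite -Dec.
rewrite eR avg_set0 !(linD (islin_commL R)) comm_scal1 addr0.
rewrite !(lin_sum (islin_commL R)).
under eq_bigr do rewrite (lin_sum (islin_commL R)).
under [X in - ('i *: (_ + X))]eq_bigr do rewrite comm_embed1.
under [X in _ = _ + X]eq_bigr do
  rewrite /Lsite (linD (islin_pat rho _)) (linN (islin_pat rho _))
   (linZ (islin_pat rho _)) (lin_sum (islin_pat rho _)).
under [X in _ = _ + X]eq_bigr do under eq_bigr do rewrite -dissip_embed1.
rewrite big_split /= scalerDr opprD -addrA; congr (_ + _).
  rewrite -scaleNr scaler_sumr; apply: eq_bigr => i _.
  by rewrite scaler_sumr.
by rewrite scaler_sumr -sumrN.
Qed.


Lemma tr_Lsite (H : op) Lops (i : 'I_n) (rho : 'M[C]_d) : \tr (Lsite H Lops i rho) = 0.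
Proof.
rewrite /Lsite raddfD raddfN /= mxtraceZ /comm raddfB /= mxtrace_mulC subrr.
rewrite mulr0 oppr0 add0r raddf_sum big1 // => L _.
rewrite /dissip raddfB /= mxtraceZ raddfD /= mxtrace_mulC mulmxA.
rewrite mulmxA -[rho *m adj L *m L]mulmxA [\tr (rho *m _)]mxtrace_mulC. set x := \tr (adj L *m L *m rho).
have h2 : (2%:R : C) != 0 by rewrite pnatr_eq0.
by field.
Qed.

Lemma embed1_inj0 (i : 'I_n) (X : 'M[C]_d) : embed1 i X = 0 -> X = 0.
Proof.
move=> h; apply/matrixP => x y; rewrite mxE.
pose s0 : cfg := [ffun _ => x].
have := congr1 (fun A => ent A (upd s0 i x) (upd s0 i y)) h.
rewrite entE ent0 /= !ffunE eqxx.
suff -> : agree_off [set i] (upd s0 i x) (upd s0 i y) by [].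
apply/forallP => k; apply/implyP; rewrite in_set1 !ffunE => /negbTE -> //.
Qed.

Lemma embed1_pair (i j : 'I_n) (rho : 'M[C]_d) : i != j ->
  embed1 i rho *m embed1 j rho = prodop (fun k => if k \in [set i; j] then rho else 1%:M).
Proof.
move=> ij; rewrite !embed1_prodop prodop_mul; apply: eq_prodop => k; rewrite !inE.
case: (k =P i) => [->|_]; first by rewrite (negbTE ij) mulmx1.
by case: (k == j); rewrite ?mul1mx ?mulmx1.
Qed.

Lemma comm_pair (H : op) (i j : 'I_n) (rho : 'M[C]_d) : i != j ->
  comm (Hpair H i j) (prodop (fun _ => rho)) =
  comm (Hpair H i j) (embed1 i rho *m embed1 j rho) *m
    prodop (fun k => if k \in [set i; j] then 1%:M else rho).
Proof.
move=> ij; set Q := prodop (fun k => if k \in [set i; j] then 1%:M else rho).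
have hR : prodop (fun _ => rho) = embed1 i rho *m embed1 j rho *m Q.
  rewrite embed1_pair // prodop_mul; apply: eq_prodop => k.
  by case: (k \in [set i; j]); rewrite ?mulmx1 ?mul1mx.
have hc (U : {set 'I_n}) : U \subset [set i; j] -> avg U H *m Q = Q *m avg U H.
  move=> sU; apply: avg_commute => k kU; by rewrite /= (subsetP sU k kU).
have hQ : Hpair H i j *m Q = Q *m Hpair H i j.
  rewrite /Hpair !mulmxDl !mulmxDr !mulNmx !mulmxN !hc //.
  - by rewrite sub1set !inE eqxx orbT.
  - by rewrite sub1set !inE eqxx.
  - exact: sub0set.
have -> : prodop (fun _ => rho) = embed1 i rho *m embed1 j rho *m Q by [].
rewrite /comm mulmxBl !mulmxA; congr (_ - _).
by rewrite -!mulmxA hQ.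
Qed.


Lemma partb (H : op) Lops (rho : 'M[C]_d) : two_local H ->
  (forall i, Lsite H Lops i rho = 0) ->
  (forall i j : 'I_n, (i < j)%N ->
      comm (Hpair H i j) (embed1 i rho *m embed1 j rho) = 0) ->
  Lind H Lops (prodop (fun _ => rho)) = 0.
Proof.
move=> H2 h3 h4; rewrite LindE // pair_sum0 ?add0r.
  by apply: big1 => i _; rewrite h3 (lin0 (islin_pat rho i)).
move=> i j ij; rewrite comm_pair; last by rewrite neq_ltn ij.
by rewrite h4 // mul0mx scaler0.
Qed.

Lemma parta (H : op) Lops (rho : 'M[C]_d) : two_local H ->
  rho \in unitmx -> \tr rho = 1 ->
  Lind H Lops (prodop (fun _ => rho)) = 0 ->
  (forall i, Lsite H Lops i rho = 0) /\
  (forall i j : 'I_n, (i < j)%N ->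
      comm (Hpair H i j) (embed1 i rho *m embed1 j rho) = 0).
Proof.
move=> H2 hu htr hL.
set R := prodop (fun _ => rho); set sig := invmx rho.
set Rinv := prodop (fun _ => sig).
have hsr : sig *m rho = 1%:M by rewrite mulVmx.
have hrs : rho *m sig = 1%:M by rewrite mulmxV.
have RRinv : R *m Rinv = 1%:M.
  by rewrite prodop_mul -prodop1; apply: eq_prodop => k; rewrite hrs.
have commR X : comm X R *m Rinv = X - R *m X *m Rinv.
  by rewrite /comm mulmxBl -[X *m R *m Rinv]mulmxA RRinv mulmx1.
have patR i Y : pat rho i Y *m Rinv = embed1 i (Y *m sig).
  rewrite /pat embed1_prodop prodop_mul; apply: eq_prodop => k.
  by case: (k == i); rewrite ?hrs.
have avgG T : avg T ((\sum_(i : 'I_n) \sum_(j : 'I_n | (i < j)%N)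
      (- 'i) *: comm (Hpair H i j) R + \sum_i pat rho i (Lsite H Lops i rho)) *m Rinv) =
   \sum_(i : 'I_n) \sum_(j : 'I_n | (i < j)%N) (- 'i) *:
      (avg T (Hpair H i j) -
       prodop (fun k => if k \in T then rho else 1%:M) *m avg T (Hpair H i j) *m
       prodop (fun k => if k \in T then sig else 1%:M)) +
   \sum_i avg T (embed1 i (Lsite H Lops i rho *m sig)).
  rewrite mulmxDl !mulmx_suml (linD (islin_avg T)) !(lin_sum (islin_avg T)).
  congr (_ + _); apply: eq_bigr => i _; last by rewrite patR.
  rewrite mulmx_suml (lin_sum (islin_avg T)); apply: eq_bigr => j _.
  rewrite -scalemxAl commR (linZ (islin_avg T)) (linB (islin_avg T)).
  by rewrite avg_conj.
have h0 T : avg T ((\sum_(i : 'I_n) \sum_(j : 'I_n | (i < j)%N)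
      (- 'i) *: comm (Hpair H i j) R + \sum_i pat rho i (Lsite H Lops i rho)) *m Rinv) = 0.
  by rewrite -LindE // hL mul0mx (lin0 (islin_avg T)).
have h3 : forall a, Lsite H Lops a rho = 0.
  move=> a; have := h0 [set a]; rewrite avgG pair_sum0 ?add0r; last first.
    move=> i j ij; rewrite avgHp0 ?mulmx0 ?mul0mx ?subrr ?scaler0 //.
    rewrite !in_set1 -negb_and; apply/negP => /andP [/eqP ia /eqP ja].
    by move: ij; rewrite ia ja ltnn.
  rewrite (bigD1 a) //= avg_embed1 in_set1 eqxx.
  under eq_bigr => i ia do rewrite avg_embed1 in_set1 (negbTE ia).
  rewrite -scaler_suml; set c := \sum_(i | i != a) _.
  rewrite -(embed1_scal a) -(linD (islin_embed1 a)) => /embed1_inj0.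
  move/eqP; rewrite addr_eq0 => /eqP hM.
  have hLs : Lsite H Lops a rho = - (c *: rho).
    by rewrite -[LHS]mulmx1 -hsr mulmxA hM mulNmx mul_scalar_mx.
  have := tr_Lsite H Lops a rho; rewrite hLs raddfN /= mxtraceZ htr mulr1.
  by move/eqP; rewrite oppr_eq0 => /eqP c0; rewrite c0 scale0r oppr0.
split => // a b ab.
have := h0 [set a; b]; rewrite avgG.
rewrite [X in _ + X]big1 ?addr0; last first.
  by move=> i _; rewrite h3 mul0mx (lin0 (islin_embed1 i)) (lin0 (islin_avg _)).
rewrite (pair_sum_single (a := a) (b := b)) //; last first.
  move=> i j ij hne; rewrite avgHp0 ?mulmx0 ?mul0mx ?subrr ?scaler0 //.
  rewrite -negb_and; apply/negP => /andP [iS jS].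
  by move: hne; rewrite -negb_and => /negP; apply; exact: pair_in ab ij iS jS.
rewrite avgHp_self // => h.
have := congr1 (fun X => (- 'i)^-1 *: X) h.
rewrite scalerA mulVf ?scale1r ?scaler0 ?oppr_eq0 ?neq0Ci // => /eqP.
rewrite subr_eq0 => /eqP hHp.
have PP : prodop (fun k => if k \in [set a; b] then sig else 1%:M) *m
          prodop (fun k => if k \in [set a; b] then rho else 1%:M) = 1%:M.
  rewrite prodop_mul -prodop1; apply: eq_prodop => k.
  by case: (k \in [set a; b]); rewrite ?hsr ?mulmx1.
rewrite embed1_pair; last by rewrite neq_ltn ab.
by rewrite /comm {1}hHp -!mulmxA PP mulmx1 subrr.
Qed.

End Dpos.
End Aux.

Theorem lemma2 (C : numClosedFieldType) (n d : nat) (H : op C n d)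
  (Hherm : adj H = H) (H2 : two_local H)
  (Lops : 'I_n -> seq 'M[C]_d) (rho : 'M[C]_d) (Hrho : density rho) :
  let iii' := forall i : 'I_n, Lsite H Lops i rho = 0 in
  let iv' := forall i j : 'I_n, (i < j)%N ->
      comm (Hpair H i j) (embed1 i rho *m embed1 j rho) = 0 in
  ((forall a : C, eigenvalue rho a -> a != 0) ->
     (Lind H Lops (tpow n rho) = 0 <-> (iii' /\ iv'))) /\
  (iii' -> iv' -> Lind H Lops (tpow n rho) = 0).
Proof.
move=> iii' iv'; rewrite /iii' /iv'; clear iii' iv'.
have [_ [_ htr]] := Hrho.
have d_gt0 : (0 < d)%N.
  rewrite lt0n; apply/eqP => d0.
  have : \tr rho = 0.
    by rewrite /mxtrace big1 // => k _; have := ltn_ord k; rewrite {2}d0.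
  by rewrite htr => /eqP; rewrite oner_eq0.
have -> : tpow n rho = @prodop C n d (fun _ => rho) by [].
split; last by move=> h3 h4; apply: partb.
move=> hev.
have hu : rho \in unitmx.
  have : ~~ eigenvalue rho 0 by apply/negP => h; have := hev 0 h; rewrite eqxx.
  rewrite /eigenvalue /eigenspace negbK kermx_eq0 row_free_unit.
  by rewrite (_ : 0%:M = 0) ?subr0 //; apply/matrixP => i j; rewrite !mxE mul0rn.
  
split; first exact: parta.
by case=> h3 h4; apply: partb.
Qed.
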